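(* Let $f:\mathbb{R}^n\to\mathbb{R}$ be continuously differentiable, convex and $L$-smooth with unique minimizer $0$ and $f(0)=0$. Let $g:\mathbb{R}^n\to\mathbb{R}$ be continuously differentiable and strictly convex with Bregman divergence $D_g(y,x)=g(y)-g(x)-\langle\nabla g(x),y-x\rangle$. Let $\alpha,\beta:[0,\infty)\to\mathbb{R}$ satisfy $e^{\alpha(t)}\ge\dot\beta(t)>0$ for all $t$ and $\beta(t)\to\infty$ as $t\to\infty$. (i) (Convex case, $\mu=0$.) Let $Z:[0,\infty)\to\mathbb{R}^n$ solve $\frac{d}{dt}\nabla g(Z)=-e^{\alpha(t)+\beta(t)}\nabla f(Z)$, and set $\tilde{\mathcal{E}}(t)=D_g(0,Z(t))+e^{\beta(t)}f(Z(t))$. (ii) (Uniformly convex case.) Suppose $f$ is $\mu$-uniformly convex with respect to $g$ for some $\mu>0$, i.e. $D_f(x,y)\ge\mu D_g(x,y)$ for all $x,y$. Let $Z:[0,\infty)\to\mathbb{R}^n$ solve $\frac{d}{dt}\nabla g(Z)=-\frac{e^{\alpha(t)}}{\mu}\nabla f(Z)$, and set $\tilde{\mathcal{E}}(t)=e^{\beta(t)}\big(\mu D_g(0,Z(t))+f(Z(t))\big)$. Then in both cases $\tilde{\mathcal{E}}$ is monotonically non-increasing and $f(Z(t))\le e^{-\beta(t)}\tilde{\mathcal{E}}(0)$ for all $t\ge0$.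
   Context: $D_f$ denotes the Bregman divergence of $f$, defined analogously to $D_g$. *)

(* Defs.v *)
From HB Require Import structures.
From mathcomp Require Import all_boot all_order all_algebra.
From mathcomp Require Import all_classical all_reals all_analysis.
Set Implicit Arguments. Unset Strict Implicit. Unset Printing Implicit Defensive.
Import Order.TTheory GRing.Theory Num.Theory.
Import numFieldNormedType.Exports.
Local Open Scope classical_set_scope.
Local Open Scope ring_scope.

Section Defs.
Variables (R : realType) (n : nat).
Notation V := 'rV[R]_n.

Definition dotv (u v : V) : R := \sum_(i < n) u 0 i * v 0 i.
Definition enorm (u : V) : R := Num.sqrt (dotv u u).

Definition is_gradient (f : V -> R) (gf : V -> V) : Prop :=
  forall x, differentiable f x /\ forall v : V, 'D_v f x = dotv (gf x) v.

Definition C1_with_gradient (f : V -> R) (gf : V -> V) : Prop :=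
  is_gradient f gf /\ continuous gf.

Definition convex_fun (f : V -> R) : Prop :=
  forall (x y : V) (l : R), 0 <= l <= 1 ->
    f (l *: x + (1 - l) *: y) <= l * f x + (1 - l) * f y.

Definition strictly_convex_fun (f : V -> R) : Prop :=
  forall (x y : V) (l : R), x != y -> 0 < l < 1 ->
    f (l *: x + (1 - l) *: y) < l * f x + (1 - l) * f y.

Definition L_smooth (gf : V -> V) (L : R) : Prop :=
  forall x y : V, enorm (gf x - gf y) <= L * enorm (x - y).

Definition bregman (g : V -> R) (gg : V -> V) (y x : V) : R :=
  g y - g x - dotv (gg x) (y - x).

Definition solves_mirror_ode (gg gf : V -> V) (c : R -> R) (Z : R -> V) : Prop :=
  {within `[0, +oo[%classic, continuous Z} /\
  forall t : R, 0 < t ->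
    derivable Z t 1 /\
    is_derive t 1 (fun s => gg (Z s)) (- (c t *: gf (Z t))).

Definition nonincreasing_on_nonneg (E : R -> R) : Prop :=
  forall s t : R, 0 <= s -> s <= t -> E t <= E s.

End Defs.

(* Main.v *)
Require Import Defs.
From HB Require Import structures.
From mathcomp Require Import all_boot all_order all_algebra.
From mathcomp Require Import all_classical all_reals all_analysis.
From mathcomp Require Import ring lra.
Import Order.TTheory GRing.Theory Num.Theory.
Import numFieldNormedType.Exports.
Local Open Scope classical_set_scope.
Local Open Scope ring_scope.

Set Implicit Arguments. Unset Strict Implicit.
Section S.
Variables (R : realType) (n : nat).
Notation V := 'rV[R]_n.

Lemma cvg_dotv (T : Type) (F : set_system T) (FF : Filter F) (u v : T -> V) (a b : V) :
  (forall i, (u x 0 i) @[x --> F] --> a 0 i) ->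
  (forall i, (v x 0 i) @[x --> F] --> b 0 i) ->
  dotv (u x) (v x) @[x --> F] --> dotv a b.
Proof.
move=> hu hv; rewrite /dotv.
apply: (@cvg_big R^o 'I_n +%R 0 xpredT) => //.
  by move=> z; apply: add_continuous.
move=> i _; exact: cvgM.
Qed.

Lemma cvg_coord (T : Type) (F : set_system T) (FF : Filter F) (u : T -> V) (a : V) i :
  u x @[x --> F] --> a -> (u x 0 i) @[x --> F] --> a 0 i.
Proof.
move=> H; exact: (cvg_comp _ _ H (@coord_continuous R 1 n 0 i a)).
Qed.

Lemma continuous_dotv (T : topologicalType) (u v : T -> V) (x : T) :
  {for x, continuous u} -> {for x, continuous v} ->
  {for x, continuous (fun s => dotv (u s) (v s))}.
Proof.
move=> cu cv; apply: cvg_dotv => i; exact: cvg_coord.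
Qed.
Arguments cvg_dotv {T F FF u v a b}.
Arguments cvg_coord {T F FF u a} i.
Lemma is_derive_coord (A : R -> V) t i : derivable A t 1 ->
  is_derive t 1 (fun s => A s 0 i) ('D_1 A t 0 i).
Proof.
move=> dA.
have dAi := (derivable_mxP A t 1).1 dA 0 i.
apply: DeriveDef => //.
by rewrite (derive_mx dA) mxE.
Qed.

Lemma is_derive_dotv (A B : R -> V) t : derivable A t 1 -> derivable B t 1 ->
  is_derive t 1 (fun s => dotv (A s) (B s))
    (dotv ('D_1 A t) (B t) + dotv (A t) ('D_1 B t)).
Proof.
move=> dA dB.
have -> : (fun s => dotv (A s) (B s)) =
   \sum_(i < n) ((fun s => A s 0 i) * (fun s => B s 0 i)).
  by apply/funext => s; rewrite /dotv fct_sumE.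
have H := @is_derive_sum R R^o R^o n
   (fun i => (fun s => A s 0 i) * (fun s => B s 0 i)) t 1
   (fun i => A t 0 i *: ('D_1 B t 0 i) + B t 0 i *: ('D_1 A t 0 i)).
apply: is_derive_eq; first apply: H.
  move=> i; apply: is_deriveM; exact: is_derive_coord.
rewrite /dotv -big_split /=; apply: eq_bigr => i _.
rewrite /GRing.scale /=; ring.
Qed.
Lemma dotvZl k (u v : V) : dotv (k *: u) v = k * dotv u v.
Proof. rewrite /dotv mulr_sumr; apply: eq_bigr => i _; rewrite !mxE; ring. Qed.
Lemma dotvZr k (u v : V) : dotv u (k *: v) = k * dotv u v.
Proof. rewrite /dotv mulr_sumr; apply: eq_bigr => i _; rewrite !mxE; ring. Qed.
Lemma dotvNl (u v : V) : dotv (- u) v = - dotv u v.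
Proof. rewrite /dotv -sumrN; apply: eq_bigr => i _; rewrite !mxE; ring. Qed.
Lemma dotvNr (u v : V) : dotv u (- v) = - dotv u v.
Proof. rewrite /dotv -sumrN; apply: eq_bigr => i _; rewrite !mxE; ring. Qed.
Lemma dotvDr (u v w : V) : dotv u (v + w) = dotv u v + dotv u w.
Proof. rewrite /dotv -big_split; apply: eq_bigr => i _; by rewrite !mxE mulrDr. Qed.
Lemma dotvDl (u v w : V) : dotv (v + w) u = dotv v u + dotv w u.
Proof. rewrite /dotv -big_split; apply: eq_bigr => i _; by rewrite !mxE mulrDl. Qed.
Lemma dotv0r (u : V) : dotv u 0 = 0.
Proof. rewrite /dotv big1 // => i _; rewrite !mxE; ring. Qed.

Lemma is_derive_comp_grad (f : V -> R) gf (Z : R -> V) t :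
  is_gradient f gf -> derivable Z t 1 ->
  is_derive t 1 (fun s => f (Z s)) (dotv (gf (Z t)) ('D_1 Z t)).
Proof.
move=> Hg dZ.
have dZ' : differentiable Z t by apply/derivable1_diffP.
have [df Df] := Hg (Z t).
have dfZ : differentiable (f \o Z) t by apply: differentiable_comp.
apply: DeriveDef.
  exact: (@diff_derivable _ _ _ (f \o Z) t 1 dfZ).
have -> : (fun s => f (Z s)) = f \o Z by [].
rewrite deriveE // diff_comp //= -(deriveE _ dZ') -(deriveE _ df).
exact: Df.
Qed.

Lemma dot_sign (A B : R -> V) t : derivable A t 1 -> derivable B t 1 ->
  (forall s, 0 <= dotv (A s - A t) (B s - B t)) ->
  0 <= dotv ('D_1 A t) ('D_1 B t).
Proof.
move=> dA dB H.
have cA : (fun h : R => h^-1 *: (A (h *: 1 + t) - A t)) @ 0^' --> 'D_1 A t by exact: dA.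
have cB : (fun h : R => h^-1 *: (B (h *: 1 + t) - B t)) @ 0^' --> 'D_1 B t by exact: dB.
have := cvg_dotv (fun i => cvg_coord i cA) (fun i => cvg_coord i cB).
move=> /(_ _ _ _).
move/cvgr_to_ge; apply.
near=> h.
rewrite dotvZl dotvZr mulrA; apply: mulr_ge0; last exact: H.
by rewrite -expr2 sqr_ge0.
Unshelve. all: by end_near.
Qed.

Lemma right_sub : ((0:R)^'+ : set_system R) `=>` (0:R)^'.
Proof.
move=> P /=; rewrite /dnbhs /within /at_right /=.
apply: filterS => z H z0; apply: H; by rewrite gt_eqF.
Qed.

Lemma grad_ineq (f : V -> R) gf : is_gradient f gf -> convex_fun f ->
  forall x y, f x + dotv (gf x) (y - x) <= f y.
Proof.
move=> Hg Hc x y.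
have [dx Dx] := Hg x.
rewrite -Dx addrC -lerBrDr.
have dv := @diff_derivable _ _ _ f x (y - x) dx.
have cv : (fun h : R => h^-1 *: (f (h *: (y - x) + x) - f x)) @ 0^' --> 'D_(y - x) f x.
  exact: dv.
have cv' := cvg_trans (cvg_app _ right_sub) cv.
apply: (cvgr_to_le cv').
near=> h.
have h0 : 0 < h by near: h; exact: nbhs_right_gt.
have h1 : h < 1 by near: h; exact: nbhs_right_lt.
have := Hc y x h.
rewrite ltW // ltW //= => /(_ isT).
have -> : h *: y + (1 - h) *: x = h *: (y - x) + x.
  by rewrite scalerBr scalerBl scale1r addrCA addrC.
move=> H.
rewrite /GRing.scale /= ler_pdivrMl //.
rewrite lerBlDr; apply: (le_trans H); rewrite mulrBl mul1r; lra.
Unshelve. all: by end_near.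
Qed.

Lemma grad_cont (f : V -> R) gf : is_gradient f gf -> continuous f.
Proof. move=> Hg x; have [d _] := Hg x; exact: differentiable_continuous. Qed.

Arguments grad_cont {f gf}.
Lemma within_cont_bregman (A : set R) (g : V -> R) gg (Z : R -> V) :
  is_gradient g gg -> continuous gg -> {within A, continuous Z} ->
  {within A, continuous (fun s => bregman g gg 0 (Z s))}.
Proof.
move=> Hg cgg cZ x.
have cg := grad_cont Hg.
rewrite /bregman.
apply: cvgB; first apply: cvgB.
- exact: cvg_cst.
- exact: (continuous_comp (cZ x) (cg _)).
- have c1 : {for x, continuous (fun s : subspace A => gg (Z s))}.
    exact: (continuous_comp (cZ x) (cgg _)).
  have c2 : {for x, continuous (fun s : subspace A => 0 - Z s)}.
    apply: cvgB; [exact: cvg_cst | exact: cZ].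
  exact: (@continuous_dotv (subspace A) _ _ x c1 c2).
Qed.

Lemma within_cont_fZ (A : set R) (f : V -> R) gf (Z : R -> V) :
  is_gradient f gf -> {within A, continuous Z} ->
  {within A, continuous (fun s => f (Z s))}.
Proof.
move=> Hg cZ x; exact: (continuous_comp (cZ x) (grad_cont Hg _)).
Qed.

Lemma within_cont_expR (A : set R) (b : R -> R) :
  {within A, continuous b} -> {within A, continuous (fun s => expR (b s))}.
Proof.
move=> cb x; exact: (continuous_comp (cb x) (@continuous_expR R _)).
Qed.

Lemma nonincr_from (E dE : R -> R) :
  {within `[0, +oo[, continuous E} ->
  (forall t : R, 0 < t -> is_derive t 1 E (dE t) /\ dE t <= 0) ->
  nonincreasing_on_nonneg E.
Proof.
move=> cE HE s t s0 st.
apply: (@ler0_derive1_nincry R E 0) => //.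
- move=> x; rewrite in_itv /= andbT => x0; have [[? _] _] := HE x x0; by [].
- move=> x; rewrite in_itv /= andbT => x0; have [H1 H2] := HE x x0.
  by rewrite derive1E derive_val.
Qed.

Lemma energy_derive (f : V -> R) gf g gg (c : R -> R) (Z : R -> V) (t : R) :
  is_gradient f gf -> is_gradient g gg -> convex_fun g ->
  solves_mirror_ode gg gf c Z -> 0 < t -> 0 < c t ->
  [/\ is_derive t 1 (fun s => bregman g gg 0 (Z s)) (- (c t * dotv (gf (Z t)) (Z t))),
      is_derive t 1 (fun s => f (Z s)) (dotv (gf (Z t)) ('D_1 Z t)) &
      dotv (gf (Z t)) ('D_1 Z t) <= 0].
Proof.
move=> Hf Hg gc [_ Hs] t0 c0.
have [dZ dG] := Hs t t0.
have dG' : derivable (fun s => gg (Z s)) t 1 by case: dG.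
have DG : 'D_1 (fun s => gg (Z s)) t = - (c t *: gf (Z t)) by case: dG.
split.
- have -> : (fun s => bregman g gg 0 (Z s)) =
     (cst (g 0) - (fun s => g (Z s))) + (fun s => dotv (gg (Z s)) (Z s)).
    by apply/funext => s /=; rewrite /bregman sub0r dotvNr opprK.
  have := (is_deriveD (is_deriveB (@is_derive_cst _ R^o R^o (g 0) t 1) (is_derive_comp_grad Hg dZ)) (is_derive_dotv dG' dZ)).
  move=> H; apply: (is_derive_eq H).
  rewrite DG dotvNl dotvZl; ring.
- exact: (is_derive_comp_grad Hf dZ).
- have mono : forall s, 0 <= dotv (gg (Z s) - gg (Z t)) (Z s - Z t).
    move=> s.
    have h1 := grad_ineq Hg gc (Z t) (Z s).
    have h2 := grad_ineq Hg gc (Z s) (Z t).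
    rewrite -opprB dotvNr in h2.
    rewrite dotvDl dotvNl; lra.
  have := dot_sign dG' dZ mono.
  rewrite DG dotvNl dotvZl oppr_ge0 => H.
  by rewrite -(pmulr_rle0 _ c0).
Qed.

Lemma strict_convex_convex (g : V -> R) : strictly_convex_fun g -> convex_fun g.
Proof.
move=> H x y l /andP[l0 l1].
have [->|xy] := eqVneq x y.
  by rewrite -scalerDl addrC subrK scale1r -mulrDl addrC subrK mul1r.
have [->|l0'] := eqVneq l 0.
  by rewrite scale0r add0r subr0 scale1r mul0r add0r mul1r.
have [->|l1'] := eqVneq l 1.
  by rewrite subrr scale0r addr0 scale1r mul0r addr0 mul1r.
apply: ltW; apply: H => //.
by rewrite lt0r l0' l0 /= lt_neqAle l1' l1.
Qed.
End S.

Unset Implicit Arguments. Set Strict Implicit.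

Theorem theorem4 (R : realType) (n : nat)
  (f : 'rV[R]_n -> R) (gf : 'rV[R]_n -> 'rV[R]_n) (L : R)
  (g : 'rV[R]_n -> R) (gg : 'rV[R]_n -> 'rV[R]_n)
  (alpha beta : R -> R) :
  C1_with_gradient f gf -> convex_fun f -> L_smooth gf L ->
  (forall x, f 0 <= f x) -> (forall x, f x = f 0 -> x = 0) -> f 0 = 0 ->
  C1_with_gradient g gg -> strictly_convex_fun g ->
  {within `[0, +oo[%classic, continuous beta} ->
  (forall t : R, 0 < t ->
     derivable beta t 1 /\ 0 < derive1 beta t /\ derive1 beta t <= expR (alpha t)) ->
  beta x @[x --> +oo] --> +oo ->
  (* (i) convex case, mu = 0 *)
  (forall Z : R -> 'rV[R]_n,
     solves_mirror_ode gg gf (fun t => expR (alpha t + beta t)) Z ->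
     let E := fun t => bregman g gg 0 (Z t) + expR (beta t) * f (Z t) in
     nonincreasing_on_nonneg E /\
     forall t : R, 0 <= t -> f (Z t) <= expR (- beta t) * E 0)
  /\
  (* (ii) mu-uniformly convex case *)
  (forall mu : R, 0 < mu ->
     (forall x y, bregman f gf x y >= mu * bregman g gg x y) ->
     forall Z : R -> 'rV[R]_n,
     solves_mirror_ode gg gf (fun t => expR (alpha t) / mu) Z ->
     let E := fun t => expR (beta t) * (mu * bregman g gg 0 (Z t) + f (Z t)) in
     nonincreasing_on_nonneg E /\
     forall t : R, 0 <= t -> f (Z t) <= expR (- beta t) * E 0).
Proof.
move=> [Hf cgf] fconv _ fmin _ f00 [Hg cgg] gsc cbeta Hbeta _.
have gc := strict_convex_convex gsc.
have fge0 : forall x, 0 <= f x by move=> x; rewrite -f00.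
have Dge0 : forall z, 0 <= bregman g gg 0 z.
  move=> z; have := grad_ineq Hg gc z 0; rewrite /bregman; lra.
have pge : forall z, f z <= dotv (gf z) z.
  move=> z; have := grad_ineq Hf fconv z 0.
  by rewrite f00 sub0r dotvNr; lra.
have dexpb : forall t : R, 0 < t ->
    is_derive t 1 (expR \o beta) (expR (beta t) * derive1 beta t).
  move=> t t0; have [db _] := Hbeta t t0.
  apply: is_derive1_comp.
  by rewrite derive1E; apply: derivableP.
split.
- move=> Z Hsol E.
  have cZ := Hsol.1.
  have HE : nonincreasing_on_nonneg E.
    apply: (@nonincr_from _ E (fun t => - (expR (alpha t + beta t) * dotv (gf (Z t)) (Z t)) +
       ((expR \o beta) t *: dotv (gf (Z t)) ('D_1 Z t) + f (Z t) *: (expR (beta t) * derive1 beta t)))).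
      move=> x; rewrite /E; apply: cvgD.
        exact: (within_cont_bregman Hg cgg cZ).
      apply: cvgM; first exact: (within_cont_expR cbeta).
      exact: (within_cont_fZ Hf cZ).
    move=> t t0.
    have [H1 H2 H3] := energy_derive Hf Hg gc Hsol t0 (expR_gt0 _).
    split.
      have -> : E = (fun s => bregman g gg 0 (Z s)) + ((expR \o beta) * (fun s => f (Z s))).
        by apply/funext.
      exact: (is_deriveD H1 (is_deriveM (dexpb t t0) H2)).
    have [_ [b0 b1]] := Hbeta t t0.
    rewrite expRD /= /GRing.scale /=.
    have := pge (Z t); have := fge0 (Z t).
    have := expR_gt0 (alpha t); have := expR_gt0 (beta t).
    set p := dotv _ (Z t); set q := dotv _ ('D_1 Z t).
    set ea := expR (alpha t); set eb := expR (beta t); set F := f (Z t).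
    move=> eb0 ea0 F0 pF.
    have e1 : eb * q <= 0 by rewrite pmulr_rle0.
    have e2 : 0 <= ea * eb * (p - F) by rewrite mulr_ge0 // ?mulr_ge0 ?subr_ge0 // ltW.
    have e3 : 0 <= F * eb * (ea - derive1 beta t) by rewrite mulr_ge0 // ?mulr_ge0 ?subr_ge0 // ltW.
    nra.
  split => // t t0.
  have Et := HE 0 t (lexx 0) t0.
  have h1 : expR (beta t) * f (Z t) <= E t by rewrite /E; have := Dge0 (Z t); lra.
  have -> : f (Z t) = expR (- beta t) * (expR (beta t) * f (Z t)).
    by rewrite mulrA -expRD addNr expR0 mul1r.
  apply: ler_wpM2l; first exact: ltW (expR_gt0 _).
  exact: le_trans h1 Et.
- move=> mu mu0 Hunif Z Hsol E.
  have cZ := Hsol.1.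
  have HE : nonincreasing_on_nonneg E.
    apply: (@nonincr_from _ E (fun t =>
       (expR \o beta) t *: (mu * (- (expR (alpha t) / mu * dotv (gf (Z t)) (Z t))) + dotv (gf (Z t)) ('D_1 Z t))
       + (mu * bregman g gg 0 (Z t) + f (Z t)) *: (expR (beta t) * derive1 beta t))).
      move=> x; rewrite /E; apply: cvgM; first exact: (within_cont_expR cbeta).
      apply: cvgD; last exact: (within_cont_fZ Hf cZ).
      apply: cvgM; first exact: cvg_cst.
      exact: (within_cont_bregman Hg cgg cZ).
    move=> t t0.
    have [H1 H2 H3] := energy_derive Hf Hg gc Hsol t0 (divr_gt0 (expR_gt0 _) mu0).
    split.
      have -> : E = (expR \o beta) * ((cst mu * (fun s => bregman g gg 0 (Z s))) + (fun s => f (Z s))).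
        by apply/funext.
      have H4 := is_deriveM (@is_derive_cst _ R^o R^o mu t 1) H1.
      have H5 := is_deriveD H4 H2.
      have H6 := is_deriveM (dexpb t t0) H5.
      apply: (is_derive_eq H6).
      by rewrite /= scaler0 addr0.
    have [_ [b0 b1]] := Hbeta t t0.
    have Hu : mu * bregman g gg 0 (Z t) <= dotv (gf (Z t)) (Z t) - f (Z t).
      have := Hunif 0 (Z t).
      have -> : bregman f gf 0 (Z t) = dotv (gf (Z t)) (Z t) - f (Z t).
        by rewrite /bregman f00 !sub0r dotvNr; ring.
      by [].
    rewrite /= /GRing.scale /=.
    have := Dge0 (Z t); have := fge0 (Z t).
    have := expR_gt0 (alpha t); have := expR_gt0 (beta t).
    move: Hu.
    set p := dotv (gf (Z t)) (Z t); set q := dotv _ ('D_1 Z t).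
    set ea := expR (alpha t); set eb := expR (beta t); set F := f (Z t).
    set D := bregman g gg 0 (Z t).
    move=> Hu eb0 ea0 F0 D0.
    have -> : mu * - (ea / mu * p) = - (ea * p) by field; rewrite gt_eqF.
    have e1 : eb * q <= 0 by rewrite pmulr_rle0.
    have e2 : 0 <= ea * eb * (p - F - mu * D).
      apply: mulr_ge0; [apply: mulr_ge0; exact: ltW | lra].
    have e3 : 0 <= (mu * D + F) * eb * (ea - derive1 beta t).
      apply: mulr_ge0; last by rewrite subr_ge0.
      apply: mulr_ge0; last exact: ltW.
      have : 0 <= mu * D by apply: mulr_ge0 => //; exact: ltW.
      lra.
    nra.
  split => // t t0.
  have Et := HE 0 t (lexx 0) t0.
  have h1 : expR (beta t) * f (Z t) <= E t.
    rewrite /E; apply: ler_wpM2l; first exact: ltW (expR_gt0 _).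
    have := Dge0 (Z t); nra.
  have -> : f (Z t) = expR (- beta t) * (expR (beta t) * f (Z t)).
    by rewrite mulrA -expRD addNr expR0 mul1r.
  apply: ler_wpM2l; first exact: ltW (expR_gt0 _).
  exact: le_trans h1 Et.
Qed.
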